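(* Let $\Lambda$ be a Gaussian lattice of hyperbolic signature $(1,n)$, $n\ge 2$, with $h$ taking values in $(1+i)\mathcal G$, let $\chi$ be an antiunitary involution, and let $r$ be a root with $\mathbb B^\chi\cap H_r\neq\emptyset$. Then there is a sublattice $N\subset\Lambda^\chi$ isomorphic to one of $A_1$, $A_1(2)$, $A_1\oplus A_1(2)$, $A_1(2)^2$ such that $\mathbb B^\chi\cap H_r=\{[x]\in\mathbb B^\chi: h(x,y)=0\text{ for all }y\in N\}$.
   Context: Let $\mathcal G=\mathbb Z[i]$. A Gaussian lattice is a free $\mathcal G$-module $\Lambda$ of finite rank with a nondegenerate Hermitian form $h$ (antilinear in first, linear in second argument). A root is $r\in\Lambda$ with $h(r,r)=-2$; $\mathbb B=\mathbb P\{z\in\Lambda\otimes_{\mathcal G}\mathbb C:h(z,z)>0\}$, $H_r=\{z\in\mathbb B:h(r,z)=0\}$. An antiunitary involution is an additive bijection $\chi$ with $\chi^2=1$, $\chi(\lambda x)=\bar\lambda\chi(x)$, $h(\chi x,\chi y)=\overline{h(x,y)}$; $\Lambda^\chi=\{x:\chi x=x\}$ with the real form $h$, and $\mathbb B^\chi=\mathbb P\{x\in\Lambda^\chi\otimes\mathbb R:h(x,x)>0\}$. $\mathbb Z$-lattices: $A_1=(-2)$ (rank one, form $-2xy$), $L(n)$ is $L$ with form scaled by $n$, $\oplus$ orthogonal sum. *)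

(* Defs.v *)
From HB Require Import structures.
From mathcomp Require Import all_boot all_order all_algebra.
Set Implicit Arguments. Unset Strict Implicit. Unset Printing Implicit Defensive.
Import Order.TTheory GRing.Theory Num.Theory.
Local Open Scope ring_scope.

Section GaussDefs.
Variable C : numClosedFieldType.
Variable m : nat.
Implicit Types (H : 'M[C]_m) (x y z : 'cV[C]_m).

Definition gaussian (a : C) : Prop := exists p q : int, a = p%:~R + q%:~R * 'i.

(* Lambda = Z[i]^m, as column vectors with Gaussian-integer entries *)
Definition in_lattice x : Prop := forall i, gaussian (x i 0).

Definition hform H x y : C := \sum_(i < m) \sum_(j < m) (x i 0)^* * H i j * y j 0.

Definition hermitian_mx H : Prop := forall i j, H j i = (H i j)^*.

(* hyperbolic signature (1, m-1): Sylvester normal form diag(1,-1,...,-1) *)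
Definition sig_diag : 'M[C]_m :=
  \matrix_(i < m, j < m) (if i == j then (if val i == 0%N then 1 else -1) else 0).
Definition hyperbolic_signature H : Prop :=
  exists P : 'M[C]_m, P \in unitmx /\ (map_mx Num.conj P)^T *m H *m P = sig_diag.

Definition values_in_1pi H : Prop :=
  forall x y, in_lattice x -> in_lattice y ->
    exists g, gaussian g /\ hform H x y = (1 + 'i) * g.

Definition antiunitary_involution H (chi : 'cV[C]_m -> 'cV[C]_m) : Prop :=
  [/\ (forall x, in_lattice x -> in_lattice (chi x)),
      (forall x y, in_lattice x -> in_lattice y -> chi (x + y) = chi x + chi y),
      (forall (l : C) x, gaussian l -> in_lattice x -> chi (l *: x) = l^* *: chi x),
      (forall x, in_lattice x -> chi (chi x) = x) &
      (forall x y, in_lattice x -> in_lattice y ->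
         hform H (chi x) (chi y) = (hform H x y)^*)].

Definition is_root H r : Prop := in_lattice r /\ hform H r r = -2.

Definition fixed_lattice (chi : 'cV[C]_m -> 'cV[C]_m) x : Prop :=
  in_lattice x /\ chi x = x.

(* Lambda^chi (x) R, realized as the real span of Lambda^chi inside C^m *)
Definition in_real_span (chi : 'cV[C]_m -> 'cV[C]_m) x : Prop :=
  exists (vs : seq 'cV[C]_m) (cs : seq C),
    [/\ size cs = size vs, all (fun c => c \is Num.real) cs,
        (forall v, v \in vs -> fixed_lattice chi v) &
        x = \sum_(k < size vs) cs`_k *: vs`_k].

(* z represents a point [z] of B^chi = P{x in Lambda^chi (x) R : h(x,x) > 0} *)
Definition in_Bchi H chi z : Prop :=
  exists (c : C) x, [/\ c != 0, in_real_span chi x, 0 < hform H x x & z = c *: x].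

Definition on_mirror H r z : Prop := hform H r z = 0.

Definition in_Zspan (vs : seq 'cV[C]_m) y : Prop :=
  exists cs : seq int, size cs = size vs /\ y = \sum_(k < size vs) vs`_k *~ cs`_k.

Definition gram H (vs : seq 'cV[C]_m) : seq (seq C) :=
  [seq [seq hform H u v | v <- vs] | u <- vs].

(* the Z-span of vs is isometric to the Z-lattice with Gram matrix G via the
   basis vs (G nondegenerate forces vs to be Z-independent, hence a basis) *)
Definition gram_is H (vs : seq 'cV[C]_m) (G : seq (seq int)) : Prop :=
  gram H vs = [seq [seq (a%:~R : C) | a <- row] | row <- G].

End GaussDefs.

Definition gram_A1 : seq (seq int) := [:: [:: (-2)%R]].
Definition gram_A1_2 : seq (seq int) := [:: [:: (-4)%R]].
Definition gram_A1_A1_2 : seq (seq int) := [:: [:: (-2)%R; 0%R]; [:: 0%R; (-4)%R]].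
Definition gram_A1_2_sq : seq (seq int) := [:: [:: (-4)%R; 0%R]; [:: 0%R; (-4)%R]].

(* Main.v *)
Require Import Defs.
From HB Require Import structures.
From mathcomp Require Import all_boot all_order all_algebra.
From mathcomp Require Import ring lra zify.
Import Order.TTheory GRing.Theory Num.Theory.
Local Open Scope ring_scope.

Definition gi (C : numClosedFieldType) (p q : int) : C := p%:~R + q%:~R * 'i.

Lemma ring_i (R : comNzRingType) (j P Q P' Q' : R) : j * j = -1 ->
  (P + Q*j)*(P'+Q'*j) = (P*P' - Q*Q') + (P*Q'+Q*P')*j.
Proof. move=> hj.
have -> : (P + Q*j)*(P'+Q'*j) = P*P' + (P*Q'+Q*P')*j + Q*Q'*(j*j) by ring.
rewrite hj; ring. Qed.

Lemma ii (C : numClosedFieldType) : 'i * 'i = -1 :> C.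
Proof. by rewrite -expr2 sqrCi. Qed.

Lemma giM (C : numClosedFieldType) p q p' q' :
  gi C p q * gi C p' q' = gi C (p * p' - q * q') (p * q' + q * p').
Proof. rewrite /gi ring_i ?ii //. rewrite !rmorphB !rmorphD !rmorphM /=. by []. Qed.

Lemma giD (C : numClosedFieldType) p q p' q' :
  gi C p q + gi C p' q' = gi C (p + p') (q + q').
Proof. rewrite /gi !rmorphD /=. ring. Qed.

Lemma giC (C : numClosedFieldType) p q : (gi C p q)^* = gi C p (- q).
Proof. rewrite /gi rmorphD rmorphM /= conjCi !conj_Creal ?realz //.
rewrite intrN. ring. Qed.

Lemma giN (C : numClosedFieldType) p q : - gi C p q = gi C (-p) (- q).
Proof. rewrite /gi !intrN. ring. Qed.

Lemma gi_eq0 (C : numClosedFieldType) p q : gi C p q = 0 -> p = 0 /\ q = 0.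
Proof. move=> h. have h' := f_equal Num.conj h. rewrite giC rmorph0 in h'.
have : gi C p q + gi C p (-q) = 0 by rewrite h h' addr0.
rewrite giD /gi; move=> e.
have p0 : p = 0.
  move: e; rewrite subrr mul0r addr0 => /eqP; rewrite intr_eq0 => /eqP; lia.
split=> //. move: h; rewrite /gi p0 /= add0r => /eqP; rewrite mulf_eq0 (negPf (neq0Ci _)) orbF intr_eq0.
by move/eqP.
Qed.

Lemma gi_inj (C : numClosedFieldType) p q p' q' : gi C p q = gi C p' q' -> p = p' /\ q = q'.
Proof. move=> e. have : gi C (p - p') (q - q') = 0.
  by rewrite -[p - p']/(p + - p') -[q - q']/(q + - q') -giD -giN e subrr.
by case/gi_eq0 => /eqP; rewrite subr_eq0 => /eqP -> /eqP; rewrite subr_eq0 => /eqP ->.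
Qed.

Lemma gi_gauss (C : numClosedFieldType) p q : gaussian (gi C p q).
Proof. by exists p, q. Qed.

Lemma gaussE (C : numClosedFieldType) (a : C) : gaussian a -> exists p q, a = gi C p q.
Proof. by []. Qed.
Lemma hformDr (C : numClosedFieldType) m (H : 'M[C]_m) x y z :
  hform H x (y + z) = hform H x y + hform H x z.
Proof. rewrite /hform -big_split; apply: eq_bigr => i _; rewrite -big_split.
by apply: eq_bigr => j _; rewrite mxE mulrDr. Qed.

Lemma hformDl (C : numClosedFieldType) m (H : 'M[C]_m) x y z :
  hform H (y + z) x = hform H y x + hform H z x.
Proof. rewrite /hform -big_split; apply: eq_bigr => i _; rewrite -big_split.
by apply: eq_bigr => j _; rewrite mxE rmorphD /= !mulrDl. Qed.

Lemma hformZr (C : numClosedFieldType) m (H : 'M[C]_m) x c y :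
  hform H x (c *: y) = c * hform H x y.
Proof. rewrite /hform mulr_sumr; apply: eq_bigr => i _; rewrite mulr_sumr.
by apply: eq_bigr => j _; rewrite mxE; ring. Qed.

Lemma hformZl (C : numClosedFieldType) m (H : 'M[C]_m) x c y :
  hform H (c *: y) x = c^* * hform H y x.
Proof. rewrite /hform mulr_sumr; apply: eq_bigr => i _; rewrite mulr_sumr.
by apply: eq_bigr => j _; rewrite mxE rmorphM /=; ring. Qed.

Lemma hform0r (C : numClosedFieldType) m (H : 'M[C]_m) x : hform H x 0 = 0.
Proof. by rewrite -(scale0r 0) hformZr mul0r. Qed.

Lemma hform0l (C : numClosedFieldType) m (H : 'M[C]_m) x : hform H 0 x = 0.
Proof. by rewrite -(scale0r 0) hformZl rmorph0 mul0r. Qed.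

Lemma hform_sumr (C : numClosedFieldType) m (H : 'M[C]_m) x N (F : 'I_N -> 'cV[C]_m) :
  hform H x (\sum_(k < N) F k) = \sum_(k < N) hform H x (F k).
Proof. elim/big_rec2: _ => [|k y1 y2 _ IH]; by rewrite ?hform0r ?hformDr ?IH. Qed.

Lemma hform_suml (C : numClosedFieldType) m (H : 'M[C]_m) x N (F : 'I_N -> 'cV[C]_m) :
  hform H (\sum_(k < N) F k) x = \sum_(k < N) hform H (F k) x.
Proof. elim/big_rec2: _ => [|k y1 y2 _ IH]; by rewrite ?hform0l ?hformDl ?IH. Qed.

Lemma hform_conj (C : numClosedFieldType) m (H : 'M[C]_m) x y : hermitian_mx H ->
  hform H y x = (hform H x y)^*.
Proof. move=> hH. rewrite /hform exchange_big rmorph_sum /=; apply: eq_bigr => i _.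
rewrite rmorph_sum /=; apply: eq_bigr => j _. rewrite !rmorphM /= conjCK -hH. ring. Qed.

Lemma hform_mx (C : numClosedFieldType) m (H : 'M[C]_m) x y :
  hform H x y = ((map_mx Num.conj x)^T *m H *m y) 0 0.
Proof. rewrite /hform mxE exchange_big /=; apply: eq_bigr => j _.
rewrite mxE mulr_suml; apply: eq_bigr => i _. by rewrite !mxE. Qed.

Lemma hform_change (C : numClosedFieldType) m (H P D : 'M[C]_m) y z :
  P \in unitmx -> (map_mx Num.conj P)^T *m H *m P = D ->
  hform H y z = hform D (invmx P *m y) (invmx P *m z).
Proof. move=> Pu hD.
rewrite -{1}(mulKVmx Pu y) -{1}(mulKVmx Pu z) !hform_mx map_mxM trmx_mul -hD.
by rewrite !mulmxA. Qed.

Lemma hform_diag (C : numClosedFieldType) n (y : 'cV[C]_n.+1) :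
  hform (sig_diag C n.+1) y y =
  (y ord0 0)^* * y ord0 0 - \sum_(i < n) (y (lift ord0 i) 0)^* * y (lift ord0 i) 0.
Proof.
have -> : hform (sig_diag C n.+1) y y =
   \sum_(i < n.+1) (y i 0)^* * (if val i == 0%N then 1 else -1) * y i 0.
  rewrite /hform; apply: eq_bigr => i _.
  rewrite (bigD1 i) //= big1 ?addr0 => [|j ji]; first by rewrite mxE eqxx.
  by rewrite mxE eq_sym (negPf ji) mulr0 mul0r.
rewrite big_ord_recl /= mulr1 -sumrN; congr (_ + _).
by apply: eq_bigr => i _; rewrite mulrN1 mulNr.
Qed.

Lemma diag_neg (C : numClosedFieldType) n (y : 'cV[C]_n.+1) :
  y ord0 0 = 0 -> hform (sig_diag C n.+1) y y <= 0 /\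
                   (hform (sig_diag C n.+1) y y = 0 -> y = 0).
Proof. move=> y0; rewrite hform_diag y0 rmorph0 mul0r sub0r oppr_le0.
have ge : forall i : 'I_n, true -> 0 <= (y (lift ord0 i) 0)^* * y (lift ord0 i) 0.
  by move=> i _; rewrite mulrC mul_conjC_ge0.
split; first by apply: sumr_ge0.
move/eqP; rewrite oppr_eq0 => /eqP e.
have z := psumr_eq0P ge e.
apply/matrixP => i j; rewrite (ord1 j) mxE.
case: (unliftP ord0 i) => [i' ->|->] //.
by apply/eqP; rewrite -mul_conjC_eq0 mulrC z.
Qed.

Lemma sig_lemma (C : numClosedFieldType) n (H : 'M[C]_n.+1) x v :
  hermitian_mx H -> hyperbolic_signature H ->
  0 < hform H x x -> hform H x v = 0 -> 0 <= hform H v v -> v = 0.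
Proof.
move=> hH [P [Pu hD]] hxx hxv hvv.
have ch y z := @hform_change C _ H P _ y z Pu hD.
set x' := invmx P *m x. set v' := invmx P *m v.
set a := x' ord0 0. set b := v' ord0 0.
have a0 : a != 0.
  apply/eqP => a0; have [le _] := @diag_neg _ _ x' a0.
  by move: hxx; rewrite ch -/x' => /lt_le_trans/(_ le); rewrite ltxx.
set k := b / a.
set w := v + (- k) *: x.
have hw : hform H w w = hform H v v + k^* * k * hform H x x.
  rewrite /w !hformDl !hformDr !hformZl !hformZr (@hform_conj _ _ H x v hH) hxv rmorph0.
  rewrite rmorphN /=; ring.
have w0 : (invmx P *m w) ord0 0 = 0.
  rewrite /w mulmxDr -scalemxAr mxE [X in _ + X]mxE -/x' -/v' -/a -/b /k.
  by rewrite mulNr divfK // subrr.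
have [wle wz] := @diag_neg _ _ _ w0.
have kk : 0 <= k^* * k by rewrite mulrC mul_conjC_ge0.
have hw0 : hform H w w = 0.
  apply/eqP; rewrite eq_le; apply/andP; split; first by rewrite ch.
  rewrite hw; apply: addr_ge0 => //.
  by apply: mulr_ge0 => //; apply: ltW.
have : hform H v v + k^* * k * hform H x x == 0 by rewrite -hw hw0.
rewrite paddr_eq0 //; last by apply: mulr_ge0 => //; apply: ltW.
case/andP=> _; rewrite mulf_eq0 (gt_eqF hxx) orbF mulrC mul_conjC_eq0 => /eqP k0.
have := wz; rewrite -ch hw0 => /(_ erefl) => w'0.
have : w = 0 by rewrite -(mulKVmx Pu w) w'0 mulmx0.
by rewrite /w k0 oppr0 scale0r addr0.
Qed.

Lemma gi_int (C : numClosedFieldType) (k : int) : gi C k 0 = k%:~R.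
Proof. by rewrite /gi mul0r addr0. Qed.

Lemma gi_m2 (C : numClosedFieldType) : gi C (-2) 0 = -2.
Proof. by rewrite gi_int intrN. Qed.

Lemma rs_conj (C : numClosedFieldType) m (H : 'M[C]_m) chi x w :
  antiunitary_involution H chi -> in_real_span chi x -> in_lattice w ->
  hform H x (chi w) = (hform H x w)^*.
Proof.
case=> hlat hadd hscal hinv hiso [vs [cs [sz hr hf ->]]] wL.
rewrite !hform_suml rmorph_sum /=; apply: eq_bigr => k _.
rewrite !hformZl rmorphM /= conjCK.
have kv : (k < size vs)%N by [].
have [vL vF] := hf _ (mem_nth 0 kv).
have cr : cs`_k \is Num.real by apply: (all_nthP 0 hr); rewrite sz.
by rewrite (conj_Creal cr) -{1}vF hiso.
Qed.

Lemma lattice_add (C : numClosedFieldType) m (x y : 'cV[C]_m) :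
  in_lattice x -> in_lattice y -> in_lattice (x + y).
Proof. move=> hx hy i; rewrite mxE.
have [p [q ->]] := @gaussE _ _ (hx i); have [p' [q' ->]] := @gaussE _ _ (hy i).
by rewrite giD; apply: gi_gauss. Qed.

Lemma lattice_scale (C : numClosedFieldType) m (c : C) (x : 'cV[C]_m) :
  gaussian c -> in_lattice x -> in_lattice (c *: x).
Proof. move=> /(@gaussE C) [p [q ->]] hy i; rewrite mxE.
have [p' [q' ->]] := @gaussE _ _ (hy i).
by rewrite giM; apply: gi_gauss. Qed.

Lemma Zspan_mem (C : numClosedFieldType) m (vs : seq 'cV[C]_m) v :
  v \in vs -> in_Zspan vs v.
Proof. move=> vin. set j := index v vs.
have jlt : (j < size vs)%N by rewrite index_mem.
exists (mkseq (fun i => (i == j)%:Z) (size vs)); rewrite size_mkseq; split=> //.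
rewrite (bigD1 (Ordinal jlt)) //= nth_mkseq // eqxx mulr1z nth_index //.
rewrite big1 ?addr0 // => k kj; rewrite nth_mkseq //.
have -> : (val k == j) = false by apply/negbTE; apply: contra kj => /eqP e; apply/eqP/val_inj.
by rewrite mulr0z.
Qed.

Lemma Zspan_orth (C : numClosedFieldType) m (H : 'M[C]_m) (vs : seq 'cV[C]_m) z y :
  (forall v, v \in vs -> hform H z v = 0) -> in_Zspan vs y -> hform H z y = 0.
Proof. move=> hv [cs [_ ->]]; rewrite hform_sumr big1 // => k _.
by rewrite -scaler_int hformZr hv ?mulr0 // mem_nth. Qed.

Lemma gi_congr (C : numClosedFieldType) a b c d : a = c -> b = d -> gi C a b = gi C c d.
Proof. by move=> -> ->. Qed.

Lemma gi_2 (C : numClosedFieldType) : gi C 2 0 = 2.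
Proof. by rewrite gi_int. Qed.

Lemma gauss_conj (C : numClosedFieldType) (c : C) : gaussian c -> gaussian c^*.
Proof. by case/(@gaussE C)=> p [q ->]; rewrite giC; apply: gi_gauss. Qed.

Ltac solve_gram comb eaAB := rewrite /gram_is /gram /= !comb eaAB !giC !giM !giD
  /gram_A1 /gram_A1_2 /gram_A1_A1_2 /gram_A1_2_sq /= -!gi_int; reflexivity.
Ltac solve_det := rewrite !giC !giM giN giD; apply/eqP => /(@gi_eq0 _ _ _) [] ; lia.

Ltac solve_gram1 rr := rewrite /gram_is /gram /= hformZl hformZr rr -gi_m2 giC !giM
  /gram_A1 /gram_A1_2 /gram_A1_A1_2 /gram_A1_2_sq /= -!gi_int; reflexivity.
Ltac solve_nz := apply/eqP => /(@gi_eq0 _ _ _) [] ; lia.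

Theorem lemma4p11 (C : numClosedFieldType) (n : nat) (H : 'M[C]_n.+1)
    (chi : 'cV[C]_n.+1 -> 'cV[C]_n.+1) (r : 'cV[C]_n.+1) :
  (2 <= n)%N ->
  hermitian_mx H ->
  hyperbolic_signature H ->
  values_in_1pi H ->
  antiunitary_involution H chi ->
  is_root H r ->
  (exists z, in_Bchi H chi z /\ on_mirror H r z) ->
  exists vs : seq 'cV[C]_n.+1,
    [/\ forall v, v \in vs -> fixed_lattice chi v,
        gram_is H vs gram_A1 \/ gram_is H vs gram_A1_2 \/
        gram_is H vs gram_A1_A1_2 \/ gram_is H vs gram_A1_2_sq &
        forall z, (in_Bchi H chi z /\ on_mirror H r z) <->
                  (in_Bchi H chi z /\ forall y, in_Zspan vs y -> hform H z y = 0)].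
Proof.
move=> hn hH hsig h1pi hau [rL rr] [z0 [[c0 [x0 [c00 xs hxx ez0]]] hm]].
have hau' := hau; case: hau' => hlat hadd hscal hinv hiso.
pose s := chi r.
have sL : in_lattice s := hlat r rL.
have hsr : chi s = r := hinv r rL.
have hss : hform H s s = -2 by rewrite hiso // rr -gi_m2 giC oppr0.
pose a := hform H r s.
have hsra : hform H s r = a^* := @hform_conj _ _ H r s hH.
have [A [B [eaAB [pp hpar]]]] : exists A B, a = gi C A B /\ exists p, A + B = 2 * p.
  have [g [gg ea]] := h1pi r s rL sL.
  have [p [q eg]] := @gaussE C g gg.
  exists (p - q), (p + q); split; last by exists p; ring.
  rewrite /a ea eg (_ : 1 + 'i = gi C 1 1); last by rewrite /gi mul1r.
  by rewrite giM; apply: gi_congr; ring.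
have comb : forall al be ga de, hform H (al *: r + be *: s) (ga *: r + de *: s) =
   al^* * ga * gi C (-2) 0 + al^* * de * a + be^* * ga * a^* + be^* * de * gi C (-2) 0.
  by move=> al be ga de; rewrite !hformDl !hformDr !hformZl !hformZr rr hss hsra gi_m2 -/a; ring.
have t0 : hform H x0 r = 0.
  move: hm; rewrite /on_mirror ez0 hformZr => /eqP; rewrite mulf_eq0 (negPf c00) /= => /eqP e.
  by rewrite (@hform_conj _ _ H r x0 hH) e rmorph0.
have t0s : hform H x0 s = 0 by rewrite (@rs_conj _ _ H chi x0 r hau xs rL) t0 rmorph0.
have fin : forall vs, (forall x, in_real_span chi x ->
     (hform H x r = 0 <-> forall v, v \in vs -> hform H x v = 0)) ->
   forall z, (in_Bchi H chi z /\ on_mirror H r z) <->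
     (in_Bchi H chi z /\ forall y, in_Zspan vs y -> hform H z y = 0).
  move=> vs crit z; split=> -[hb h]; split=> //; case: hb => [c [x [c0' xs' _ ez]]].
    move: h; rewrite /on_mirror ez hformZr => /eqP; rewrite mulf_eq0 (negPf c0') /= => /eqP e.
    have xr : hform H x r = 0 by rewrite (@hform_conj _ _ H r x hH) e rmorph0.
    have hv := (crit x xs').1 xr.
    move=> y; apply: (@Zspan_orth _ _ H vs (c *: x)) => v vin; by rewrite hformZl hv ?mulr0.
  have : forall v, v \in vs -> hform H x v = 0.
    move=> v vin; have := h v (@Zspan_mem _ _ vs v vin); rewrite ez hformZl => /eqP.
    by rewrite mulf_eq0 conjC_eq0 (negPf c0') /= => /eqP.
  move/(crit x xs') => xr.
  by rewrite /on_mirror ez hformZr (@hform_conj _ _ H x r hH) xr rmorph0 mulr0.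
have hxv : forall x al be, in_real_span chi x ->
    hform H x (al *: r + be *: s) = al * hform H x r + be * (hform H x r)^*.
  by move=> x al be xs'; rewrite hformDr !hformZr (@rs_conj _ _ H chi x r hau xs' rL).
have fixv : forall mu, gaussian mu -> fixed_lattice chi (mu *: r + mu^* *: s).
  move=> mu gm; have gm' := @gauss_conj _ _ gm; split.
    by apply: lattice_add; apply: lattice_scale.
  rewrite hadd; try by apply: lattice_scale.
  by rewrite (hscal mu r gm rL) (hscal _ s gm' sL) conjCK hsr addrC.

have indep : forall (m1 m2 n1 n2 : int) G,
  gram_is H [:: gi C m1 m2 *: r + (gi C m1 m2)^* *: s;
                gi C n1 n2 *: r + (gi C n1 n2)^* *: s] G ->
  (gi C m1 m2)^* * gi C n1 n2 - (gi C n1 n2)^* * gi C m1 m2 != 0 ->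
  exists vs : seq 'cV[C]_n.+1, [/\ forall v, v \in vs -> fixed_lattice chi v,
        gram_is H vs G &
        forall z, (in_Bchi H chi z /\ on_mirror H r z) <->
                  (in_Bchi H chi z /\ forall y, in_Zspan vs y -> hform H z y = 0)].
  move=> m1 m2 n1 n2 G hg hdet.
  exists [:: gi C m1 m2 *: r + (gi C m1 m2)^* *: s; gi C n1 n2 *: r + (gi C n1 n2)^* *: s].
  split=> //.
  - move=> w; rewrite !inE => /orP [] /eqP ->; apply: fixv; apply: gi_gauss.
  - apply: fin => x xs'; split.
      move=> xr w; rewrite !inE => /orP [] /eqP ->; by rewrite hxv // xr rmorph0 !mulr0 addr0.
    move=> h; have e1 := h _ (mem_head _ _).
    have e2 := h (gi C n1 n2 *: r + (gi C n1 n2)^* *: s) (mem_last (gi C m1 m2 *: r + (gi C m1 m2)^* *: s) [:: gi C n1 n2 *: r + (gi C n1 n2)^* *: s]).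
    rewrite !hxv // in e1 e2.
    set t := hform H x r in e1 e2 *.
    set mu := gi C m1 m2 in e1 e2 hdet *. set nu := gi C n1 n2 in e1 e2 hdet *.
    have : (mu^* * nu - nu^* * mu) * t = mu^* * (nu * t + nu^* * t^*) - nu^* * (mu * t + mu^* * t^*) by ring.
    rewrite e1 e2 !mulr0 subrr => /eqP; rewrite mulf_eq0 (negPf hdet) /= => /eqP.
    done.
have dep : forall (m1 m2 : int) (u : C) G, s = u *: r -> (gi C m1 m2)^* * u = gi C m1 m2 ->
  gram_is H [:: gi C m1 m2 *: r] G -> gi C m1 m2 != 0 ->
  exists vs : seq 'cV[C]_n.+1, [/\ forall v, v \in vs -> fixed_lattice chi v,
        gram_is H vs G &
        forall z, (in_Bchi H chi z /\ on_mirror H r z) <->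
                  (in_Bchi H chi z /\ forall y, in_Zspan vs y -> hform H z y = 0)].
  move=> m1 m2 u G es hu hg hmu; exists [:: gi C m1 m2 *: r]; split=> //.
  - move=> w; rewrite inE => /eqP ->; split; first by apply: lattice_scale => //; apply: gi_gauss.
    by rewrite (hscal _ r (gi_gauss _ _ _) rL) -/s es scalerA hu.
  - apply: fin => x xs'; split.
      by move=> xr w; rewrite inE => /eqP ->; rewrite hformZr xr mulr0.
    move=> h; have := h _ (mem_head _ _); rewrite hformZr => /eqP.
    by rewrite mulf_eq0 (negPf hmu) /= => /eqP.
pose v := a *: r + 2 *: s.
have hx0v : hform H x0 v = 0 by rewrite hformDr !hformZr t0 t0s !mulr0 addr0.
have eN : a^* * a = (A * A + B * B)%:~R.
  by rewrite eaAB giC giM -gi_int; apply: gi_congr; ring.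
have hvv : hform H v v = 2 * (a^* * a) - 8.
  rewrite /v comb gi_m2 rmorph_nat /=; ring.
case: (boolP (A * A + B * B < 4)) => hK.
  have hA : -1 <= A <= 1 by apply/andP; split; nia.
  have hB : -1 <= B <= 1 by apply/andP; split; nia.
  have : A = -1 \/ A = 0 \/ A = 1 by lia.
  have : B = -1 \/ B = 0 \/ B = 1 by lia.
  case=> [eB|[eB|eB]]; case=> [eA|[eA|eA]]; subst A B; try by exfalso; lia.
  - have [vs [f1 f2 f3]] := indep 0 1 1 (-1) gram_A1_A1_2 ltac:(solve_gram comb eaAB) ltac:(solve_det).
    by exists vs; split=> //; right; right; left.
  - have [vs [f1 f2 f3]] := indep 1 0 1 (-1) gram_A1_A1_2 ltac:(solve_gram comb eaAB) ltac:(solve_det).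
    by exists vs; split=> //; right; right; left.
  - have [vs [f1 f2 f3]] := indep 1 0 0 1 gram_A1_2_sq ltac:(solve_gram comb eaAB) ltac:(solve_det).
    by exists vs; split=> //; right; right; right.
  - have [vs [f1 f2 f3]] := indep 0 1 1 1 gram_A1_A1_2 ltac:(solve_gram comb eaAB) ltac:(solve_det).
    by exists vs; split=> //; right; right; left.
  - have [vs [f1 f2 f3]] := indep 1 0 1 1 gram_A1_A1_2 ltac:(solve_gram comb eaAB) ltac:(solve_det).
    by exists vs; split=> //; right; right; left.
have hvv0 : 0 <= hform H v v.
  rewrite hvv eN.
  have -> : (2 : C) * (A * A + B * B)%:~R - 8 = (2 * (A * A + B * B) - 8)%:~R.
    by rewrite rmorphB rmorphM.
  rewrite ler0z; lia.
have v0 : v = 0 := @sig_lemma _ _ H x0 v hH hsig hxx hx0v hvv0.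
have two0 : (2 : C) != 0 by rewrite pnatr_eq0.
pose u := - (a / 2).
have e2u : 2 * u = - a by rewrite /u mulrN mulrC divfK.
have e2s : 2 *: s = - (a *: r).
  by apply/eqP; rewrite -addr_eq0 addrC; apply/eqP.
have es : s = u *: r.
  have -> : s = 2^-1 *: (2 *: s) by rewrite scalerA mulVf ?scale1r.
  by rewrite e2s scalerN scalerA -scaleNr /u mulrC.
have uu : u^* * u = 1.
  apply: (@mulIf _ (-2)); first by rewrite oppr_eq0.
  have := hss; rewrite [in hform H s s]es hformZl hformZr rr => e.
  by rewrite mul1r -mulrA e.
have aa : a^* * a = 4.
  rewrite -[a]opprK -e2u rmorphN rmorphM /= rmorph_nat mulNr mulrN opprK.
  rewrite mulrACA uu mulr1; ring.
have K4 : A * A + B * B = 4 by apply: (@intr_inj C); rewrite -eN aa.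
have hA : -2 <= A <= 2 by apply/andP; split; nia.
have hB : -2 <= B <= 2 by apply/andP; split; nia.
have : A = -2 \/ A = -1 \/ A = 0 \/ A = 1 \/ A = 2 by lia.
have : B = -2 \/ B = -1 \/ B = 0 \/ B = 1 \/ B = 2 by lia.
have hu : forall m1 m2 : int, (gi C m1 m2)^* * - a = 2 * gi C m1 m2 ->
   (gi C m1 m2)^* * u = gi C m1 m2.
  by move=> m1 m2 h; apply: (mulfI two0); rewrite mulrCA e2u.
case=> [eB|[eB|[eB|[eB|eB]]]]; case=> [eA|[eA|[eA|[eA|eA]]]]; subst A B; try by exfalso; lia.
- have [vs [f1 f2 f3]] := dep 1 1 u gram_A1_2 es
     ltac:(apply: hu; rewrite eaAB -gi_2 giC giN !giM; reflexivity)
     ltac:(solve_gram1 rr) ltac:(solve_nz).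
  by exists vs; split=> //; right; left.
- have [vs [f1 f2 f3]] := dep 1 0 u gram_A1 es
     ltac:(apply: hu; rewrite eaAB -gi_2 giC giN !giM; reflexivity)
     ltac:(solve_gram1 rr) ltac:(solve_nz).
  by exists vs; split=> //; left.
- have [vs [f1 f2 f3]] := dep 0 1 u gram_A1 es
     ltac:(apply: hu; rewrite eaAB -gi_2 giC giN !giM; reflexivity)
     ltac:(solve_gram1 rr) ltac:(solve_nz).
  by exists vs; split=> //; left.
- have [vs [f1 f2 f3]] := dep 1 (-1) u gram_A1_2 es
     ltac:(apply: hu; rewrite eaAB -gi_2 giC giN !giM; reflexivity)
     ltac:(solve_gram1 rr) ltac:(solve_nz).
  by exists vs; split=> //; right; left.
Qed.
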